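(* Let $k$ be a field of characteristic $p>2$ ($p$ prime). For any $u,v,w\in k_1\langle X\rangle$, $$\kappa(u,v+w)\equiv\kappa(u,v)+\kappa(u,w)+\sum_{i=0}^{p-2}(i+1)^{-1}\binom{p-1}{i}[u,v^{i+1}w^{p-(i+1)}u^{p-1}]\pmod{T^{(3)}}.$$
   Context: $X=\{x_i\mid i\ge0\}$ is countably infinite; $k_1\langle X\rangle$ is the free unitary associative $k$-algebra on $X$. $[a,b]=ab-ba$, $[a,b,c]=[[a,b],c]$. $T^{(3)}$ is the $T$-ideal of $k_1\langle X\rangle$ (ideal invariant under all endomorphisms) generated by $[x_1,x_2,x_3]$. For $u,v\in k_1\langle X\rangle$, $\kappa(u,v)=[u,v]u^{p-1}v^{p-1}$. Congruence modulo a subspace $U$ means the difference lies in $U$. *)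

(* Defs.v *)
From HB Require Import structures.
From mathcomp Require Import all_boot all_order all_algebra.
From mathcomp Require Import finmap.
From mathcomp.multinomials Require Import monalg.
Set Implicit Arguments. Unset Strict Implicit. Unset Printing Implicit Defensive.
Import Order.TTheory GRing.Theory Num.Theory.
Local Open Scope ring_scope.

(* k_1<X>: the free unitary associative k-algebra on X = {x_i | i >= 0},
   realised as the monoid algebra of the free monoid on nat. *)
Definition freealg (k : fieldType) := {malg k[{fmonom nat}]}.

Definition xvar (k : fieldType) (i : nat) : freealg k := << fmu i >>.

Definition lbr (k : fieldType) (a b : freealg k) : freealg k := a * b - b * a.
Definition lbr3 (k : fieldType) (a b c : freealg k) : freealg k :=
  lbr (lbr a b) c.

Definition is_alg_endo (k : fieldType) (phi : freealg k -> freealg k) : Prop :=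
  [/\ forall a b, phi (a + b) = phi a + phi b,
      forall (c : k) a, phi (c *: a) = c *: phi a,
      forall a b, phi (a * b) = phi a * phi b
    & phi 1 = 1].

Definition is_ideal (k : fieldType) (I : freealg k -> Prop) : Prop :=
  [/\ I 0,
      forall a b, I a -> I b -> I (a + b)
    & forall a b f, I f -> I (a * f * b)].

Definition is_T_ideal (k : fieldType) (I : freealg k -> Prop) : Prop :=
  is_ideal I /\ forall phi, is_alg_endo phi -> forall f, I f -> I (phi f).

(* T^(3): the T-ideal generated by [x_1, x_2, x_3] (smallest such) *)
Definition T3 (k : fieldType) (f : freealg k) : Prop :=
  forall I : freealg k -> Prop,
    is_T_ideal I -> I (lbr3 (xvar k 1) (xvar k 2) (xvar k 3)) -> I f.

Definition congr_mod (k : fieldType) (U : freealg k -> Prop) (a b : freealg k) :=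
  U (a - b).

Definition kappa (k : fieldType) (p : nat) (u v : freealg k) : freealg k :=
  lbr u v * u ^+ p.-1 * v ^+ p.-1.

(* Main.v *)
Require Import Defs.
From HB Require Import structures.
From mathcomp Require Import all_boot all_order all_algebra.
From mathcomp Require Import finmap.
From mathcomp.multinomials Require Import monalg.
Import Order.TTheory GRing.Theory Num.Theory.
Local Open Scope ring_scope.
Set Implicit Arguments. Unset Strict Implicit. Unset Printing Implicit Defensive.

Definition sub3 (k : fieldType) (a b c : freealg k) (i : nat) : freealg k :=
  if i == 1%N then a else if i == 2%N then b else if i == 3%N then c else 0.
Definition hsub (k : fieldType) (a b c : freealg k) (m : fmonom nat) : freealg k :=
  \prod_(i <- (m : seq nat)) sub3 a b c i.
Lemma hsub_mult (k : fieldType) (a b c : freealg k) : mmorphism (hsub a b c).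
Proof. split; last by rewrite /hsub fm1 big_nil.
by move=> x y; rewrite /hsub fmM big_cat. Qed.
HB.instance Definition _ k a b c := isMultiplicative.Build (fmonom nat) (freealg k) (@hsub k a b c) (hsub_mult a b c).
Definition phi (k : fieldType) (a b c : freealg k) := mmap (@malgC (fmonom nat) k) (hsub a b c).

Lemma malgMC (k : fieldType) (g : freealg k) (c : k) : g * c%:MP = c *: g.
Proof.
rewrite malgM_def malgZ_def /malgC fgmulgU /fgscale.
by apply: eq_bigr => k' _; rewrite mulm1 mulrC.
Qed.

Lemma malgCA (k : fieldType) (c : k) : c%:A = c%:MP :> freealg k.
Proof. by rewrite -[c%:MP]mulr1 mul_malgC. Qed.

Lemma phiM (k : fieldType) (a b c : freealg k) :
  GRing.multiplicative (phi a b c).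
Proof.
apply: commr_mmap_is_multiplicative => g m m'.
rewrite /GRing.comm /= mul_malgC malgMC //.
Qed.

Lemma phi_endo (k : fieldType) (a b c : freealg k) : is_alg_endo (phi a b c).
Proof.
split.
- exact: raddfD.
- move=> c0 g; rewrite /phi mmapZ /=.
  rewrite mul_malgC; reflexivity.
- by move=> x y; have := (phiM a b c).1 x y.
- by have := (phiM a b c).2.
Qed.

Lemma phi_x (k : fieldType) (a b c : freealg k) i :
  phi a b c (xvar k i) = sub3 a b c i.
Proof.
rewrite /phi /xvar mmapU [X in X * _](_ : _ = 1); last exact: mpolyC1E.
rewrite mul1r /hsub fmU big_seq1; reflexivity.
Qed.
Lemma endo_lbr (k : fieldType) (f : freealg k -> freealg k) :
  is_alg_endo f -> forall x y, f (lbr x y) = lbr (f x) (f y).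
Proof.
case=> Hd Hs Hm _ x y.
have HB u v : f (u - v) = f u - f v.
  by rewrite Hd -scaleN1r Hs scaleN1r.
by rewrite /lbr HB !Hm.
Qed.

Lemma T_comm (k : fieldType) (I : freealg k -> Prop) :
  is_T_ideal I -> I (lbr3 (xvar k 1) (xvar k 2) (xvar k 3)) ->
  forall a b c, I (lbr3 a b c).
Proof.
move=> [HI Hend] Hg a b c.
have := Hend _ (phi_endo a b c) _ Hg.
rewrite /lbr3 !(endo_lbr (phi_endo a b c)) !phi_x.
have -> : sub3 a b c 1 = a by [].
have -> : sub3 a b c 2 = b by [].
have -> : sub3 a b c 3 = c by [].
exact.
Qed.

Definition br (R : nzRingType) (a b : R) : R := a * b - b * a.

Definition good (R : nzRingType) (I : R -> Prop) :=
  [/\ I 0, forall a b, I a -> I b -> I (a + b),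
      forall a b f, I f -> I (a * f * b) & forall a b c, I (br (br a b) c)].

Definition eqv (R : nzRingType) (I : R -> Prop) (a b : R) := I (a - b).

Lemma I0 (R : nzRingType) (I : R -> Prop) : good I -> I 0. Proof. by case. Qed.
Lemma ID (R : nzRingType) (I : R -> Prop) : good I -> forall a b, I a -> I b -> I (a + b).
Proof. by case. Qed.
Lemma IM (R : nzRingType) (I : R -> Prop) : good I -> forall a b f, I f -> I (a * f * b).
Proof. by case. Qed.
Lemma IC (R : nzRingType) (I : R -> Prop) : good I -> forall a b c, I (br (br a b) c).
Proof. by case. Qed.
Lemma IMl (R : nzRingType) (I : R -> Prop) : good I -> forall a f, I f -> I (a * f).
Proof. by move=> HI a f /(IM HI a 1); rewrite mulr1. Qed.
Lemma IMr (R : nzRingType) (I : R -> Prop) : good I -> forall b f, I f -> I (f * b).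
Proof. by move=> HI b f /(IM HI 1 b); rewrite mul1r. Qed.
Lemma IN (R : nzRingType) (I : R -> Prop) : good I -> forall f, I f -> I (- f).
Proof. by move=> HI f /(IMl HI (-1)); rewrite mulN1r. Qed.
Lemma IB (R : nzRingType) (I : R -> Prop) : good I -> forall a b, I a -> I b -> I (a - b).
Proof. by move=> HI a b Ha Hb; apply: ID => //; apply: IN. Qed.
Lemma IMn (R : nzRingType) (I : R -> Prop) : good I -> forall f n, I f -> I (f *+ n).
Proof. by move=> HI f n /(IMr HI n%:R); rewrite mulr_natr. Qed.
Lemma Isum (R : nzRingType) (I : R -> Prop) : good I -> forall (J : Type) (r : seq J) (P : pred J) F,
  (forall i, P i -> I (F i)) -> I (\sum_(i <- r | P i) F i).
Proof. move=> HI J r P F H; apply: (big_ind I) => //; [exact: I0 | exact: ID]. Qed.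
Lemma IZ (k : fieldType) (R : lalgType k) (I : R -> Prop) : good I ->
  forall (c : k) f, I f -> I (c *: f).
Proof. by move=> HI c f /(IMl HI c%:A); rewrite mulr_algl. Qed.

Lemma eqv_refl (R : nzRingType) (I : R -> Prop) : good I -> forall a, eqv I a a.
Proof. by move=> HI a; rewrite /eqv subrr; apply: I0. Qed.
Lemma eqv_eq (R : nzRingType) (I : R -> Prop) : good I -> forall a b, a = b -> eqv I a b.
Proof. by move=> HI a b ->; apply: eqv_refl. Qed.
Lemma eqv_sym (R : nzRingType) (I : R -> Prop) : good I -> forall a b, eqv I a b -> eqv I b a.
Proof. by move=> HI a b /(IN HI); rewrite opprB. Qed.
Lemma eqv_trans (R : nzRingType) (I : R -> Prop) : good I -> forall a b c, eqv I a b -> eqv I b c -> eqv I a c.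
Proof. by move=> HI a b c H1 H2; have := ID HI H1 H2; rewrite /eqv addrA subrK. Qed.
Lemma eqvD (R : nzRingType) (I : R -> Prop) : good I -> forall a b c d, eqv I a b -> eqv I c d -> eqv I (a + c) (b + d).
Proof. by move=> HI a b c d H1 H2; have := ID HI H1 H2; rewrite /eqv opprD addrACA. Qed.
Lemma eqvN (R : nzRingType) (I : R -> Prop) : good I -> forall a b, eqv I a b -> eqv I (- a) (- b).
Proof. by move=> HI a b /(IN HI); rewrite /eqv opprB addrC opprK. Qed.
Lemma eqvB (R : nzRingType) (I : R -> Prop) : good I -> forall a b c d, eqv I a b -> eqv I c d -> eqv I (a - c) (b - d).
Proof. by move=> HI a b c d H1 H2; apply: eqvD => //; apply: eqvN. Qed.
Lemma eqvMl (R : nzRingType) (I : R -> Prop) : good I -> forall x a b, eqv I a b -> eqv I (x * a) (x * b).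
Proof. by move=> HI x a b /(IMl HI x); rewrite /eqv mulrBr. Qed.
Lemma eqvMr (R : nzRingType) (I : R -> Prop) : good I -> forall x a b, eqv I a b -> eqv I (a * x) (b * x).
Proof. by move=> HI x a b /(IMr HI x); rewrite /eqv mulrBl. Qed.
Lemma eqvMn (R : nzRingType) (I : R -> Prop) : good I -> forall n a b, eqv I a b -> eqv I (a *+ n) (b *+ n).
Proof. by move=> HI n a b /(IMn HI n); rewrite /eqv mulrnBl. Qed.
Lemma eqvZ (k : fieldType) (R : lalgType k) (I : R -> Prop) : good I ->
  forall (c : k) a b, eqv I a b -> eqv I (c *: a) (c *: b).
Proof. by move=> HI c a b /(IZ HI c); rewrite /eqv scalerBr. Qed.
Lemma eqv_sum (R : nzRingType) (I : R -> Prop) : good I -> forall (J : Type) (r : seq J) (P : pred J) F G,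
  (forall i, P i -> eqv I (F i) (G i)) ->
  eqv I (\sum_(i <- r | P i) F i) (\sum_(i <- r | P i) G i).
Proof. by move=> HI J r P F G H; rewrite /eqv -sumrB; apply: Isum. Qed.
Lemma eqv0 (R : nzRingType) (I : R -> Prop) : good I -> forall a, I a -> eqv I a 0.
Proof. by move=> HI a; rewrite /eqv subr0. Qed.

Lemma brM (R : nzRingType) (a x y : R) : br a (x * y) = br a x * y + x * br a y.
Proof. by rewrite /br mulrBl mulrBr !mulrA addrA subrK. Qed.
Lemma brMl (R : nzRingType) (x z y : R) : br (x * z) y = x * br z y + br x y * z.
Proof. by rewrite /br mulrBl mulrBr !mulrA addrA subrK. Qed.
Lemma brD (R : nzRingType) (a b c : R) : br a (b + c) = br a b + br a c.
Proof. by rewrite /br mulrDr mulrDl opprD addrACA. Qed.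
Lemma brC (R : nzRingType) (a b : R) : br a b = - br b a.
Proof. by rewrite /br opprB. Qed.
Lemma br_self (R : nzRingType) (a : R) n : br a (a ^+ n) = 0.
Proof. by rewrite /br -exprS -exprSr subrr. Qed.
Lemma br_exp1 (R : nzRingType) (a : R) : br a a = 0.
Proof. by rewrite /br subrr. Qed.

Lemma cen (R : nzRingType) (I : R -> Prop) : good I -> forall a b x, eqv I (br a b * x) (x * br a b).
Proof. by move=> HI a b x; exact: (IC HI a b x). Qed.

Lemma kill (R : nzRingType) (I : R -> Prop) : good I -> forall a b c, I (br a b * br a c).
Proof.
move=> HI a b c.
have E : br a b * br a c = br (br a (b * a)) c - br (br a b) c * a.
  rewrite brM br_exp1 mulr0 addr0.
  move: (br a b) => d.
  rewrite /br mulrBr mulrBl !mulrA opprB addrA subrK //.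
rewrite E; apply: (IB HI); [exact: (IC HI) | apply: (IMr HI); exact: (IC HI)].
Qed.

Lemma pascal (V : zmodType) (A : nat -> V) n :
  \sum_(0 <= j < n.+1) A j.+1 *+ 'C(n, j) + \sum_(0 <= j < n.+1) A j *+ 'C(n, j)
  = \sum_(0 <= j < n.+2) A j *+ 'C(n.+1, j).
Proof.
rewrite [in RHS]big_nat_recl // [X in _ + X]big_nat_recl //.
have -> : \sum_(0 <= j < n.+1) A j.+1 *+ 'C(n.+1, j.+1) =
          \sum_(0 <= j < n.+1) A j.+1 *+ 'C(n, j.+1) + \sum_(0 <= j < n.+1) A j.+1 *+ 'C(n, j).
  by rewrite -big_split /=; apply: eq_bigr => j _; rewrite binS mulrnDr.
rewrite [\sum_(0 <= j < n.+1) A j.+1 *+ 'C(n, j.+1)]big_nat_recr //=.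
rewrite (bin_small (ltnSn n)) mulr0n addr0 !bin0.
by rewrite addrC -addrA.
Qed.

Lemma eqv_I (R : nzRingType) (I : R -> Prop) : good I -> forall a b, eqv I a b -> I b -> I a.
Proof. by move=> HI a b H1 H2; have := ID HI H1 H2; rewrite subrK. Qed.

Lemma eqv_sum_nat (R : nzRingType) (I : R -> Prop) : good I -> forall m n (F G : nat -> R),
  (forall i, (m <= i < n)%N -> eqv I (F i) (G i)) ->
  eqv I (\sum_(m <= i < n) F i) (\sum_(m <= i < n) G i).
Proof.
move=> HI m n F G H; rewrite /eqv -sumrB big_nat_cond.
by apply: (Isum HI) => i /andP[Hi _]; apply: H.
Qed.

Lemma brX (R : nzRingType) (I : R -> Prop) : good I -> forall a b n,
  eqv I (br a (b ^+ n.+1)) ((br a b * b ^+ n) *+ n.+1).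
Proof.
move=> HI a b; elim=> [|n IH].
  by apply: eqv_eq; rewrite // expr1 expr0 mulr1 mulr1n.
rewrite exprSr brM.
apply: (eqv_trans HI (eqvD HI (eqvMr HI b IH) (eqv_sym HI (cen HI a b (b ^+ n.+1))))).
apply: (eqv_eq HI).
by rewrite mulrnAl -mulrA -exprSr (mulrSr _ n.+1).
Qed.

Lemma brXX (R : nzRingType) (J : R -> Prop)
  (JD : forall x y, J x -> J y -> J (x + y))
  (JMl : forall a x, J x -> J (a * x)) (JMr : forall b x, J x -> J (x * b)) u s :
  J (br u s) -> forall n m, J (br (u ^+ n) (s ^+ m)).
Proof.
move=> H.
have J0 : J 0 by rewrite -(mul0r (br u s)); apply: JMl.
have H1 m : J (br u (s ^+ m)).
  elim: m => [|m IH]; first by rewrite /br expr0 mulr1 mul1r subrr.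
  by rewrite exprSr brM; apply: JD; [apply: JMr | apply: JMl].
elim=> [|n IH] m; first by rewrite /br expr0 mulr1 mul1r subrr.
by rewrite exprSr brMl; apply: JD; [apply: JMl | apply: JMr].
Qed.

Lemma ann_good (R : nzRingType) (I : R -> Prop) : good I -> forall a b,
  [/\ forall x y, I (br a b * x) -> I (br a b * y) -> I (br a b * (x + y)),
      forall c x, I (br a b * x) -> I (br a b * (c * x)),
      forall c x, I (br a b * x) -> I (br a b * (x * c))
    & forall x, I (br a b * x) -> I (br a b * - x)].
Proof.
move=> HI a b; split.
- by move=> x y Hx Hy; rewrite mulrDr; apply: (ID HI).
- move=> c x Hx; apply: (eqv_I HI (b := c * (br a b * x))); last exact: (IMl HI).
  by rewrite mulrA [c * _]mulrA; apply: (eqvMr HI); apply: (cen HI).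
- by move=> c x Hx; rewrite mulrA; apply: (IMr HI).
- by move=> x Hx; rewrite mulrN; apply: (IN HI).
Qed.

Lemma binom (R : nzRingType) (I : R -> Prop) : good I -> forall a b v w,
  I (br a b * br v w) -> forall n,
  eqv I (br a b * (v + w) ^+ n)
        (\sum_(0 <= j < n.+1) (br a b * (v ^+ j * w ^+ (n - j))) *+ 'C(n, j)).
Proof.
move=> HI a b v w Hvw.
have := ann_good HI a b; case=> AD AMl AMr AN.
have Hwv : I (br a b * br w v) by rewrite (brC w v); apply: (AN).
have Hm m j : I (br a b * (v ^+ j * br (w ^+ m) v)).
  apply: (AMl); have := brXX AD AMl AMr Hwv m 1; by rewrite expr1.
elim=> [|n IH].
  by apply: (eqv_eq HI); rewrite big_nat1 !expr0 !mulr1 bin0 mulr1n.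
rewrite exprSr mulrA.
apply: (eqv_trans HI (eqvMr HI (v + w) IH)).
rewrite mulrDr !mulr_suml.
apply: (eqv_trans HI (b := \sum_(0 <= j < n.+1) (br a b * (v ^+ j.+1 * w ^+ (n.+1 - j.+1))) *+ 'C(n, j)
   + \sum_(0 <= j < n.+1) (br a b * (v ^+ j * w ^+ (n.+1 - j))) *+ 'C(n, j))).
  apply: (eqvD HI).
    apply: (eqv_sum HI) => j _; rewrite mulrnAl; apply: (eqvMn HI).
    rewrite /eqv subSS -mulrA -mulrBr.
    have -> : v ^+ j * w ^+ (n - j) * v - v ^+ j.+1 * w ^+ (n - j) = v ^+ j * br (w ^+ (n - j)) v.
      by rewrite /br mulrBr !mulrA -exprSr.
    exact: Hm.
  apply: (eqv_sum_nat HI) => j /andP [_ Hj]; rewrite mulrnAl; apply: (eqv_eq HI).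
  by rewrite -mulrA -mulrA -exprSr subSn.
rewrite (pascal (fun j => br a b * (v ^+ j * w ^+ (n.+1 - j)))).
exact: (eqv_refl HI).
Qed.

Lemma move_u (R : nzRingType) (I : R -> Prop) : good I -> forall a b u s n,
  I (br a b * br u s) ->
  eqv I (br a b * u ^+ n * s ^+ n) (br a b * s ^+ n * u ^+ n).
Proof.
move=> HI a b u s n H.
have := ann_good HI a b; case=> AD AMl AMr AN.
rewrite /eqv -!mulrA -mulrBr.
exact: (brXX AD AMl AMr H).
Qed.

Lemma coefs (k : fieldType) p n i : p \in [pchar k] -> p = n.+1 -> (i < n)%N ->
  [/\ ((i.+1)%:R : k)^-1 * ('C(n, i))%:R * (i.+1)%:R = ('C(n, i))%:R
    & ((i.+1)%:R : k)^-1 * ('C(n, i))%:R * (n - i)%:R = ('C(n, i.+1))%:R].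
Proof.
move=> hc Hp Hi.
have nz : ((i.+1)%:R : k) != 0.
  by rewrite -(dvdn_pcharf hc) gtnNdvd // Hp ltnS.
split; first by rewrite [_^-1 * _]mulrC mulfVK.
by rewrite -mulrA -natrM mulnC -mul_bin_left natrM mulKf.
Qed.

Lemma term (k : fieldType) (R : lalgType k) (I : R -> Prop) : good I ->
  forall p n i (u v w : R) N, p \in [pchar k] -> p = n.+1 -> (i < n)%N ->
  eqv I ((((i.+1)%:R : k)^-1 * ('C(n, i))%:R) *: br u (v ^+ i.+1 * w ^+ (n - i) * u ^+ N))
        ((br u v * (v ^+ i * w ^+ (n - i))) *+ 'C(n, i) * u ^+ N
         + (br u w * (v ^+ i.+1 * w ^+ (n - i.+1))) *+ 'C(n, i.+1) * u ^+ N).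
Proof.
move=> HI p n i u v w N hc Hp Hi.
have [K1 K2] := coefs hc Hp Hi.
rewrite brM br_self mulr0 addr0 brM.
set m := (n - i.+1)%N.
have Hm : (n - i)%N = m.+1 by rewrite /m subnSK.
rewrite Hm.
apply: (eqv_trans HI (b := (((i.+1)%:R : k)^-1 * ('C(n, i))%:R) *:
   (((br u v * (v ^+ i * w ^+ m.+1)) *+ i.+1
    + (br u w * (v ^+ i.+1 * w ^+ m)) *+ m.+1) * u ^+ N))).
  apply: (eqvZ HI); apply: (eqvMr HI); apply: (eqvD HI).
    apply: (eqv_trans HI (eqvMr HI _ (brX HI u v i))).
    by apply: (eqv_eq HI); rewrite mulrnAl !mulrA.
  apply: (eqv_trans HI (eqvMl HI _ (brX HI u w m))).
  rewrite mulrnAr; apply: (eqvMn HI).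
  rewrite !mulrA.
  by apply: (eqvMr HI); apply: (eqv_sym HI); apply: (cen HI).
apply: (eqv_eq HI).
rewrite scalerAl scalerDr -!scaler_nat !scalerA K1 -Hm K2 !scaler_nat.
by rewrite mulrDl.
Qed.

Lemma mainG (k : fieldType) (R : lalgType k) (I : R -> Prop) : good I ->
  forall p, p \in [pchar k] -> (2 < p)%N -> forall u v w : R,
  eqv I (br u (v + w) * u ^+ p.-1 * (v + w) ^+ p.-1)
    (br u v * u ^+ p.-1 * v ^+ p.-1 + br u w * u ^+ p.-1 * w ^+ p.-1
     + \sum_(0 <= i < p.-1)
         (((i.+1)%:R : k)^-1 * ('C(p.-1, i))%:R) *:
           br u (v ^+ i.+1 * w ^+ (p - i.+1) * u ^+ p.-1)).
Proof.
move=> HI p hc hp2 u v w.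
have Hp : p = p.-1.+1 by rewrite prednK // (ltn_trans _ hp2).
move: (p.-1) Hp => n Hp.
have ES : \sum_(0 <= i < n)
         (((i.+1)%:R : k)^-1 * ('C(n, i))%:R) *:
           br u (v ^+ i.+1 * w ^+ (p - i.+1) * u ^+ n) =
   \sum_(0 <= i < n)
         (((i.+1)%:R : k)^-1 * ('C(n, i))%:R) *:
           br u (v ^+ i.+1 * w ^+ (n - i) * u ^+ n).
  by apply: eq_bigr => i _; rewrite Hp subSS.
rewrite ES; clear ES.
have k11 := kill HI u v v.
have k12 := kill HI u v w.
have k21 := kill HI u w v.
have k22 := kill HI u w w.
have B1 : I (br u v * br v w).
  by rewrite (brC u v) mulNr; apply: (IN HI); apply: (kill HI).
have B2 : I (br u w * br v w).
  by rewrite (brC u w) (brC v w) mulrNN; apply: (kill HI).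
apply: (eqv_trans HI (b :=
   (\sum_(0 <= j < n.+1) (br u v * (v ^+ j * w ^+ (n - j))) *+ 'C(n, j)) * u ^+ n
 + (\sum_(0 <= j < n.+1) (br u w * (v ^+ j * w ^+ (n - j))) *+ 'C(n, j)) * u ^+ n)).
  rewrite brD (mulrDl (br u v) (br u w)) (mulrDl (br u v * u ^+ n)).
  apply: (eqvD HI).
    apply: (eqv_trans HI (@move_u _ I HI u v u (v + w) n _)).
      by rewrite brD mulrDr; apply: (ID HI).
    by apply: (eqvMr HI); apply: (binom HI).
  apply: (eqv_trans HI (@move_u _ I HI u w u (v + w) n _)).
    by rewrite brD mulrDr; apply: (ID HI).
  by apply: (eqvMr HI); apply: (binom HI).
apply: (eqv_sym HI).
apply: (eqv_trans HI (b :=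
   br u v * v ^+ n * u ^+ n + br u w * w ^+ n * u ^+ n
 + \sum_(0 <= i < n)
     ((br u v * (v ^+ i * w ^+ (n - i))) *+ 'C(n, i) * u ^+ n
      + (br u w * (v ^+ i.+1 * w ^+ (n - i.+1))) *+ 'C(n, i.+1) * u ^+ n))).
  apply: (eqvD HI); first apply: (eqvD HI).
  - exact: (@move_u _ I HI u v u v n k11).
  - exact: (@move_u _ I HI u w u w n k22).
  - apply: (eqv_sum_nat HI) => i /andP [_ Hi].
    exact: (term HI u v w n hc Hp Hi).
apply: (eqv_eq HI).
rewrite big_split /= !mulr_suml.
rewrite (big_nat_recr n 0) // (big_nat_recl n 0) //.
rewrite subnn subn0 !expr0 mulr1 mul1r binn bin0 !mulr1n.
rewrite /=.
by rewrite [_ + br u v * v ^+ n * u ^+ n]addrC addrACA.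
Qed.

Unset Implicit Arguments.
Theorem lemma2p4 (k : fieldType) (p : nat) (hchar : p \in [pchar k])
    (hp2 : (2 < p)%N) (u v w : freealg k) :
  congr_mod (@T3 k)
    (kappa p u (v + w))
    (kappa p u v + kappa p u w
     + \sum_(0 <= i < p.-1)
         (((i.+1)%:R : k)^-1 * ('C(p.-1, i))%:R) *:
           lbr u (v ^+ i.+1 * w ^+ (p - i.+1) * u ^+ p.-1)).
Proof.
rewrite /congr_mod => I HT Hg.
have HC := T_comm HT Hg.
have HI : good I.
  case: HT => [[H0 HD HM] _]; split => //.
have H := mainG HI hchar hp2 u v w. rewrite /eqv in H. exact H.
Qed.
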